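(* Let $\mathcal C\subseteq 2^{[n]}$ be a degree two code and let $i,j\in[n]$ with $j<i$ in $P(\mathcal C)$. Then $N(j)\subseteq I(i)\cup N(i)$.
   Context: A code is a set $\mathcal C\subseteq 2^{[n]}$, $[n]=\{1,\dots,n\}$. Standing conventions: $\emptyset\in\mathcal C$; every neuron lies in some codeword; no two distinct neurons lie in exactly the same codewords. A pseudo-monomial in $\mathbb F_2[x_1,\dots,x_n]$ is $\prod_{a\in\alpha}x_a\prod_{b\in\beta}(1-x_b)$ with $\alpha\cap\beta=\emptyset$, ordered by divisibility. $J_\mathcal C=\langle\rho_\gamma:\gamma\notin\mathcal C\rangle$ with $\rho_\gamma=\prod_{a\in\gamma}x_a\prod_{b\notin\gamma}(1-x_b)$; $\mathrm{CF}(J_\mathcal C)$ is the set of minimal pseudo-monomials in $J_\mathcal C$. $\mathcal C$ is degree two if every element of $\mathrm{CF}(J_\mathcal C)$ has degree two. $G(\mathcal C)$ is the graph on $[n]$ with edge $ab$ whenever $\mathrm{CF}(J_\mathcal C)$ has no pseudo-monomial whose two variables are $x_a,x_b$; $P(\mathcal C)$ is the partial order on $[n]$ with $a<b$ iff $x_a(1-x_b)\in\mathrm{CF}(J_\mathcal C)$. $N(a)$ is the set of neighbors of $a$ in $G(\mathcal C)$ and $I(a)=\{b: b<a \text{ in } P(\mathcal C)\}$. *)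

(* Defs.v *)
From HB Require Import structures.
From mathcomp Require Import all_boot all_order all_algebra.
From mathcomp Require Import mpoly.
Set Implicit Arguments. Unset Strict Implicit. Unset Printing Implicit Defensive.
Import GRing.Theory.
Local Open Scope ring_scope.

(* Neurons are 'I_n (i.e. [n] shifted to 0..n-1); codewords are {set 'I_n};
   a code is a {set {set 'I_n}}. Polynomials live in F_2[x_0..x_{n-1}]. *)
Notation poly2 n := {mpoly 'F_2[n]}.

Definition pmono (n : nat) (alpha beta : {set 'I_n}) : poly2 n :=
  (\prod_(a in alpha) 'X_a) * \prod_(b in beta) (1 - 'X_b).

Definition is_pm (n : nat) (alpha beta : {set 'I_n}) : bool :=
  [disjoint alpha & beta].

Definition rho (n : nat) (gamma : {set 'I_n}) : poly2 n := pmono gamma (~: gamma).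

Definition inJ (n : nat) (C : {set {set 'I_n}}) (f : poly2 n) : Prop :=
  exists h : {set 'I_n} -> poly2 n,
    f = \sum_(gamma in ~: C) h gamma * rho gamma.

Definition pdivides (n : nat) (f g : poly2 n) : Prop := exists h, g = h * f.

Definition inCF (n : nat) (C : {set {set 'I_n}}) (alpha beta : {set 'I_n}) : Prop :=
  [/\ is_pm alpha beta, inJ C (pmono alpha beta) &
      forall alpha' beta' : {set 'I_n}, is_pm alpha' beta' ->
        inJ C (pmono alpha' beta') ->
        pdivides (pmono alpha' beta') (pmono alpha beta) ->
        pmono alpha' beta' = pmono alpha beta].

Definition good_code (n : nat) (C : {set {set 'I_n}}) : Prop :=
  [/\ set0 \in C,
      forall a : 'I_n, exists2 c, c \in C & a \in c &
      forall a b : 'I_n, (forall c, c \in C -> (a \in c) = (b \in c)) -> a = b].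

Definition degree_two (n : nat) (C : {set {set 'I_n}}) : Prop :=
  forall alpha beta, inCF C alpha beta -> (#|alpha| + #|beta| = 2)%N.

Definition Gedge (n : nat) (C : {set {set 'I_n}}) (a b : 'I_n) : Prop :=
  a <> b /\ ~ (exists alpha beta, inCF C alpha beta /\ alpha :|: beta = [set a; b]).

Definition Plt (n : nat) (C : {set {set 'I_n}}) (a b : 'I_n) : Prop :=
  inCF C [set a] [set b].

Definition Nbhd (n : nat) (C : {set {set 'I_n}}) (a : 'I_n) : 'I_n -> Prop :=
  fun b => Gedge C a b.
Definition Ibelow (n : nat) (C : {set {set 'I_n}}) (a : 'I_n) : 'I_n -> Prop :=
  fun b => Plt C b a.

(* Main.v *)
Require Import Defs.
From HB Require Import structures.
From mathcomp Require Import all_boot all_order all_algebra.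
From mathcomp Require Import mpoly.
From mathcomp Require Import ring.
Import GRing.Theory.
Local Open Scope ring_scope.
Set Implicit Arguments. Unset Strict Implicit.
From Stdlib Require Import Classical.

Section S.
Variable n : nat.
Implicit Types (a b c : {set 'I_n}).

Definition inbox a b c := (a \subset c) && [disjoint b & c].

Lemma inboxP a b c : reflect ((forall x, x \in a -> x \in c) /\ (forall x, x \in b -> x \notin c)) (inbox a b c).
Proof.
rewrite /inbox disjoints_subset; apply: (iffP andP) => [[/subsetP H1 /subsetP H2]|[H1 H2]]; split => //.
- by move=> x /H2; rewrite inE.
- by apply/subsetP.
- by apply/subsetP => x /H2; rewrite inE.
Qed.

Lemma disjP a b : reflect (forall x, x \in a -> x \in b -> False) [disjoint a & b].
Proof.
rewrite disjoints_subset; apply: (iffP subsetP) => H x xa.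
- by move=> xb; move: (H x xa); rewrite inE xb.
- by rewrite inE; apply/negP => /(H x xa).
Qed.

Definition ev c : 'I_n -> 'F_2 := fun x => (x \in c)%:R.

Lemma ev_pmono a b c : (pmono a b).@[ev c] = (inbox a b c)%:R.
Proof.
rewrite /pmono mevalM !rmorph_prod /=.
under eq_bigr => x _ do rewrite mevalXU.
under [X in _ * X = _]eq_bigr => x _ do rewrite mevalB meval1 mevalXU.
have E1 : \prod_(x in a) ev c x = (a \subset c)%:R.
  case: (boolP (a \subset c)) => H.
  - by apply: big1 => x xa; rewrite /ev (subsetP H x xa).
  - case/subsetPn: H => x xa xc.
    by rewrite (bigD1 x) //= /ev (negbTE xc) mul0r.
have E2 : \prod_(x in b) (1 - ev c x) = [disjoint b & c]%:R.
  case: (boolP [disjoint b & c]) => H.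
  - by apply: big1 => x xb; rewrite /ev (disjointFr H xb) subr0.
  - have [x xb xc] : exists2 x, x \in b & x \in c.
      by apply/exists_inP; apply: contraR H => /exists_inP H; apply/disjP => x xb xc; apply: H; exists x.
    by rewrite (bigD1 x) //= /ev xc subrr mul0r.
by rewrite E1 E2 /inbox; case: (_ \subset _); case: [disjoint _ & _]; rewrite ?mul1r ?mul0r.
Qed.


Lemma rho_box g c : inbox g (~: g) c -> g = c.
Proof.
case/inboxP => H1 H2; apply/setP => x; apply/idP/idP; first exact: H1.
by move=> xc; apply: contraTT xc => xg; apply: H2; rewrite inE.
Qed.

Lemma inJ_box (C : {set {set 'I_n}}) a b c :
  inJ C (pmono a b) -> c \in C -> ~~ inbox a b c.
Proof.
move=> [h E] cC; apply/negP => H.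
have := congr1 (meval (ev c)) E.
rewrite ev_pmono H raddf_sum /= big1 ?oner_eq0 //.
move=> g; rewrite inE => gC.
rewrite mevalM /rho ev_pmono.
case: (boolP (inbox g (~: g) c)) => [/rho_box Eg|]; last by rewrite mulr0.
by move: gC; rewrite Eg cC.
Qed.

Lemma div_box a b a' b' c :
  pdivides (pmono a' b') (pmono a b) -> inbox a b c -> inbox a' b' c.
Proof.
move=> [h E] H; apply: contraT => H'.
have := congr1 (meval (ev c)) E.
by rewrite ev_pmono mevalM ev_pmono H (negbTE H') mulr0 => /eqP; rewrite oner_eq0.
Qed.

Lemma inJ_add (C : {set {set 'I_n}}) f g : inJ C f -> inJ C g -> inJ C (f + g).
Proof.
move=> [h1 ->] [h2 ->]; exists (fun x => h1 x + h2 x).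
by rewrite -big_split /=; apply: eq_bigr => x _; rewrite mulrDl.
Qed.

Lemma box_inJ (C : {set {set 'I_n}}) a b :
  [disjoint a & b] -> (forall c, c \in C -> ~~ inbox a b c) -> inJ C (pmono a b).
Proof.
move Em : #|~: (a :|: b)| => m; elim: m a b Em => [|m IH] a b Em dab HC.
- have U : a :|: b = setT.
    have /eqP E0 : ~: (a :|: b) == set0 by rewrite -cards_eq0 Em.
    by rewrite -(setCK (a :|: b)) E0 setC0.
  have Eb : b = ~: a.
    apply/setP => x; rewrite inE; move/setP: U => /(_ x); rewrite !inE.
    case: (boolP (x \in a)) => xa /=; last by [].
    by rewrite (disjointFr dab xa).
  have aC : a \notin C.
    apply/negP => /HC /negP; apply; apply/inboxP; split => // x; by rewrite Eb inE.
  exists (fun g => if g == a then 1 else 0).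
  rewrite (bigD1 a) /=; last by rewrite inE.
  rewrite eqxx mul1r big1 ?addr0; first by rewrite Eb.
  by move=> g /andP [_ /negbTE ->]; rewrite mul0r.
- have [v vn] : exists v, v \in ~: (a :|: b).
    by apply/set0Pn; rewrite -card_gt0 Em.
  have va : v \notin a by move: vn; rewrite !inE negb_or => /andP [].
  have vb : v \notin b by move: vn; rewrite !inE negb_or => /andP [].
  have Ecard : #|~: (v |: (a :|: b))| = m.
    have -> : ~: (v |: (a :|: b)) = ~: (a :|: b) :\ v.
      by apply/setP => x; rewrite !inE negb_or andbC.
    by move: Em; rewrite (cardsD1 v) vn add1n => -[<-].
  have -> : pmono a b = pmono (v |: a) b + pmono a (v |: b).
    rewrite /pmono !big_setU1 //=; ring.
  apply: inJ_add.
  + apply: IH.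
    * by rewrite -setUA.
    * apply/disjP => x; rewrite !inE => /orP [/eqP ->|xa] xb; first by rewrite xb in vb.
      by rewrite (disjointFr dab xa) in xb.
    * move=> c /HC; apply: contra => /inboxP [H1 H2]; apply/inboxP; split => // x xa.
      by apply: H1; rewrite inE xa orbT.
  + apply: IH.
    * by rewrite setUCA.
    * apply/disjP => x xa; rewrite !inE => /orP [/eqP E|xb]; first by rewrite -E xa in va.
      by rewrite (disjointFr dab xa) in xb.
    * move=> c /HC; apply: contra => /inboxP [H1 H2]; apply/inboxP; split => // x xb.
      by apply: H2; rewrite inE xb orbT.
Qed.

End S.

Theorem lemma2p3 (n : nat) (C : {set {set 'I_n}}) (i j : 'I_n) :
  good_code C -> degree_two C -> Plt C j i ->
  forall k : 'I_n, Nbhd C j k -> Ibelow C i k \/ Nbhd C i k.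
Proof.
move=> [C0 Cex _] _ Pji k [kj NE].
have ki : k <> i.
  move=> E; subst k; apply: NE; exists [set j], [set i]; split => //.
case: (Pji) => pm_ji J_ji _.
have Hji c : c \in C -> j \in c -> i \in c.
  move=> cC jc; apply/negPn/negP => ic; move: (inJ_box J_ji cC) => /negP; apply.
  by apply/inboxP; split => x; rewrite inE => /eqP ->.
case: (classic (exists alpha beta, inCF C alpha beta /\ alpha :|: beta = [set i; k])); last first.
  by move=> H; right; split => // E; apply: ki.
move=> [al [be [[pm Jab Hmin] U]]].
have Hu x : (x \in al) || (x \in be) = (x == i) || (x == k).
  by move/setP: U => /(_ x); rewrite !inE.
have Hd x : x \in al -> x \in be -> False by apply/disjP.
have Hab c : c \in C -> (forall x, x \in al -> x \in c) -> (forall x, x \in be -> x \notin c) -> False.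
  by move=> cC H1 H2; move: (inJ_box Jab cC) => /negP; apply; apply/inboxP.
case: (boolP (i \in al)) => ia; case: (boolP (k \in al)) => ka.
- (* x_i x_k *)
  exfalso; apply: NE; exists [set j; k], set0; split; last by rewrite setU0.
  split.
  + by apply/disjP => x _; rewrite inE.
  + apply: box_inJ; first by apply/disjP => x _; rewrite inE.
    move=> c cC; apply/negP => /inboxP [H1 _].
    have jc : j \in c by apply: H1; rewrite !inE eqxx.
    have kc : k \in c by apply: H1; rewrite !inE eqxx orbT.
    have ic := Hji c cC jc.
    apply: (Hab c cC).
    * move=> x xa; have : (x == i) || (x == k) by rewrite -Hu xa.
      by case/orP => /eqP ->.
    * move=> x xb; have : (x == i) || (x == k) by rewrite -Hu xb orbT.
      by case/orP => /eqP E; subst x; case: (Hd _ _ xb).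
  + move=> a' b' _ Ja' Hdiv.
    have Hc c : inbox [set j; k] set0 c -> inbox a' b' c by apply: div_box.
    have /inboxP [Ha' _] : inbox a' b' [set j; k].
      by apply/Hc/inboxP; split => // x; rewrite inE.
    have /inboxP [_ Hb'] : inbox a' b' setT.
      by apply/Hc/inboxP; split => // x; rewrite inE.
    have b'0 : b' = set0 by apply/setP => x; rewrite inE; apply/negP => /Hb'; rewrite inE.
    case: (boolP (j \in a')) => ja; case: (boolP (k \in a')) => ka'.
    * have -> : a' = [set j; k].
        apply/eqP; rewrite eqEsubset; apply/andP; split; apply/subsetP => x //.
        by apply: Ha'.
        by rewrite !inE => /orP [] /eqP ->.
      by rewrite b'0.
    * have [c cC jc] := Cex j.
      exfalso; move: (inJ_box Ja' cC) => /negP; apply; apply/inboxP; split; last by rewrite b'0 => x; rewrite inE.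
      move=> x xa; move: (Ha' x xa); rewrite !inE => /orP [] /eqP E; subst x => //.
      by rewrite xa in ka'.
    * have [c cC kc] := Cex k.
      exfalso; move: (inJ_box Ja' cC) => /negP; apply; apply/inboxP; split; last by rewrite b'0 => x; rewrite inE.
      move=> x xa; move: (Ha' x xa); rewrite !inE => /orP [] /eqP E; subst x => //.
      by rewrite xa in ja.
    * exfalso; move: (inJ_box Ja' C0) => /negP; apply; apply/inboxP; split; last by rewrite b'0 => x; rewrite inE.
      move=> x xa; move: (Ha' x xa); rewrite !inE => /orP [] /eqP E; subst x.
      by rewrite xa in ja. by rewrite xa in ka'.
- (* x_i (1 - x_k) *)
  have Hik c : c \in C -> i \in c -> k \in c.
    move=> cC ic; apply/negPn/negP => kc; apply: (Hab c cC).
    * move=> x xa; have : (x == i) || (x == k) by rewrite -Hu xa.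
      by case/orP => /eqP E; subst x => //; rewrite xa in ka.
    * move=> x xb; have : (x == i) || (x == k) by rewrite -Hu xb orbT.
      by case/orP => /eqP E; subst x => //; case: (Hd _ ia xb).
  exfalso; apply: NE; exists [set j], [set k]; split => //.
  split.
  + by apply/disjP => x; rewrite !inE => /eqP -> /eqP E; apply: kj.
  + apply: box_inJ; first by apply/disjP => x; rewrite !inE => /eqP -> /eqP E; apply: kj.
    move=> c cC; apply/negP => /inboxP [H1 H2].
    have jc : j \in c by apply: H1; rewrite !inE.
    have := H2 k; rewrite inE eqxx => /(_ isT).
    by rewrite (Hik c cC (Hji c cC jc)).
  + move=> a' b' _ Ja' Hdiv.
    have Hc c : inbox [set j] [set k] c -> inbox a' b' c by apply: div_box.
    have /inboxP [Ha' _] : inbox a' b' [set j].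
      apply/Hc/inboxP; split => x; rewrite !inE => /eqP -> //.
      by apply/negP => /eqP E; apply: kj.
    have /inboxP [_ Hb'] : inbox a' b' (~: [set k]).
      apply/Hc/inboxP; split => x; rewrite !inE => /eqP ->; last by rewrite eqxx.
      by apply/negP => /eqP E; apply: kj; rewrite E.
    have Hb2 x : x \in b' -> x = k by move/Hb'; rewrite !inE negbK => /eqP.
    have Ha2 x : x \in a' -> x = j by move/Ha'; rewrite !inE => /eqP.
    case: (boolP (j \in a')) => ja; case: (boolP (k \in b')) => kb.
    * have -> : a' = [set j] by apply/setP => x; rewrite inE; apply/idP/eqP => [/Ha2|->].
      have -> : b' = [set k] by apply/setP => x; rewrite inE; apply/idP/eqP => [/Hb2|->].
      by [].
    * have [c cC jc] := Cex j.
      exfalso; move: (inJ_box Ja' cC) => /negP; apply; apply/inboxP; split.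
      by move=> x /Ha2 ->.
      by move=> x xb; move: (xb); rewrite (Hb2 x xb) => E; rewrite E in kb.
    * exfalso; move: (inJ_box Ja' C0) => /negP; apply; apply/inboxP; split.
      by move=> x xa; move: (xa); rewrite (Ha2 x xa) => E; rewrite E in ja.
      by move=> x; rewrite inE.
    * exfalso; move: (inJ_box Ja' C0) => /negP; apply; apply/inboxP; split.
      by move=> x xa; move: (xa); rewrite (Ha2 x xa) => E; rewrite E in ja.
      by move=> x; rewrite inE.
- (* x_k (1 - x_i) *)
  left.
  have Ea : al = [set k].
    apply/setP => x; rewrite inE; apply/idP/eqP => [xa|->//].
    have : (x == i) || (x == k) by rewrite -Hu xa.
    by case/orP => /eqP // E; subst x; rewrite xa in ia.
  have Eb : be = [set i].
    apply/setP => x; rewrite inE; apply/idP/eqP => [xb|->].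
    have : (x == i) || (x == k) by rewrite -Hu xb orbT.
    by case/orP => /eqP // E; subst x; case: (Hd _ ka xb).
    by have := Hu i; rewrite (negbTE ia) eqxx.
  rewrite /Ibelow /Plt -Ea -Eb.
  by split.
- exfalso; apply: (Hab _ C0).
  + move=> x xa; have : (x == i) || (x == k) by rewrite -Hu xa.
    by case/orP => /eqP E; subst x; [rewrite xa in ia | rewrite xa in ka].
  + by move=> x; rewrite inE.
Qed.
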